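(* Let $k\ge 2$, $n\neq 2k$, $G\in\mathcal{M}_k(n,s)$, and let $i<j$ be vertices of $G$. Then: (i) if $\mathrm{sh}_{ij}(G)\in\mathrm{Cov}_k(n,s)$, then $G\in\mathrm{Cov}_k(n,s)$; (ii) if $\mathrm{sh}_{ij}(G)\in\mathrm{Cl}_k(n,s)$, then $G\in\mathrm{Cl}_k(n,s)$.
   Context: A $k$-uniform hypergraph ($k$-graph) $G=(V,E)$ consists of a finite vertex set $V\subseteq\mathbb{N}$ and a family $E$ of $k$-element subsets of $V$ (edges). A matching is a family of pairwise disjoint edges; $\mu(G)$ is the size of a largest matching in $G$. Let $\mathcal{H}_k(n,s)$ be the set of all $k$-graphs $G=(V,E)$ with $|V|=n$ and $\mu(G)=s$; let $\mu_k(n,s)=\max\{|E(G)|: G\in\mathcal{H}_k(n,s)\}$ and $\mathcal{M}_k(n,s)=\{G\in\mathcal{H}_k(n,s): |E(G)|=\mu_k(n,s)\}$. $\mathrm{Cov}_k(n,s)$ is the family of $k$-graphs $G=(V,E)$ with $|V|=n$ such that for some $S\subseteq V$ with $|S|=s$, $E=\{e\subseteq V: |e|=k,\ e\cap S\neq\emptyset\}$. $\mathrm{Cl}_k(n,s)$ is the family of $k$-graphs $G=(V,E)$ with $|V|=n$ such that for some $T\subseteq V$ with $|T|=ks+k-1$, $E=\{e\subseteq T: |e|=k\}$. For vertices $i<j$, the $(i,j)$-shift $\mathrm{sh}_{ij}(G)$ is the $k$-graph on $V$ obtained from $G$ by replacing each edge $e\in E$ with $j\in e$, $i\notin e$ and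 $(e\setminus\{j\})\cup\{i\}\notin E$ by the set $(e\setminus\{j\})\cup\{i\}$ (all other edges are kept). *)

(* Defs.v *)
From mathcomp Require Import all_boot finmap.
Set Implicit Arguments. Unset Strict Implicit. Unset Printing Implicit Defensive.
Local Open Scope fset_scope.

Record hgraph := HGraph { verts : {fset nat}; edges : {fset {fset nat}} }.

Definition is_kgraph (k : nat) (G : hgraph) : Prop :=
  forall e, e \in edges G -> e `<=` verts G /\ #|` e| = k.

Definition is_matching (G : hgraph) (M : {fset {fset nat}}) : Prop :=
  M `<=` edges G /\
  forall e f, e \in M -> f \in M -> e != f -> e `&` f = fset0.

Definition matching_number (G : hgraph) (s : nat) : Prop :=
  (exists M, is_matching G M /\ #|` M| = s) /\
  (forall M, is_matching G M -> #|` M| <= s).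

Definition inH (k n s : nat) (G : hgraph) : Prop :=
  is_kgraph k G /\ #|` verts G| = n /\ matching_number G s.

Definition inM (k n s : nat) (G : hgraph) : Prop :=
  inH k n s G /\ (forall G', inH k n s G' -> #|` edges G'| <= #|` edges G|).

Definition inCov (k n s : nat) (G : hgraph) : Prop :=
  #|` verts G| = n /\
  exists S : {fset nat}, S `<=` verts G /\ #|` S| = s /\
    forall e : {fset nat},
      e \in edges G <-> (e `<=` verts G /\ #|` e| = k /\ e `&` S <> fset0).

Definition inCl (k n s : nat) (G : hgraph) : Prop :=
  #|` verts G| = n /\
  exists T : {fset nat}, T `<=` verts G /\ #|` T| = k * s + k - 1 /\
    forall e : {fset nat}, e \in edges G <-> (e `<=` T /\ #|` e| = k).

Definition shift_edge (G : hgraph) (i j : nat) (e : {fset nat}) : {fset nat} :=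
  if [&& j \in e, i \notin e & (i |` (e `\ j)) \notin edges G]
  then i |` (e `\ j) else e.

Definition shift (i j : nat) (G : hgraph) : hgraph :=
  HGraph (verts G) [fset shift_edge G i j e | e in edges G].

(* Main.v *)
Require Import Defs.
From mathcomp Require Import all_boot finmap.
From mathcomp Require Import zify.
From Stdlib Require Import Classical.
Set Implicit Arguments. Unset Strict Implicit.
Local Open Scope fset_scope.

Definition sw (a b : nat) (e : {fset nat}) : {fset nat} := a |` (e `\ b).

Lemma in_sw a b e x : (x \in sw a b e) = (x == a) || ((x != b) && (x \in e)).
Proof. by rewrite /sw !inE. Qed.

Lemma swK a b e : b \in e -> a \notin e -> sw b a (sw a b e) = e.
Proof.
move=> be ae; apply/fsetP=> x; rewrite !in_sw.
case: (eqVneq x b) => [->|xb]; first by rewrite be.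
case: (eqVneq x a) => [->|xa] //=; by rewrite (negbTE ae).
Qed.

Lemma card_sw a b e : a \notin e -> b \in e -> #|` sw a b e| = #|` e|.
Proof.
move=> ae be; rewrite /sw cardfsU1 (cardfsD1 b e) be !inE (negbTE ae) andbF.
by [].
Qed.

Lemma ex_sub (A : {fset nat}) m : m <= #|`A| -> exists B, B `<=` A /\ #|`B| = m.
Proof.
elim: m => [|m IH] hm; first by exists fset0; rewrite fsub0set cardfs0.
have [B [BA cB]] := IH (ltnW hm).
have : ~~ (A `<=` B) by apply/negP => /fsubset_leq_card; lia.
case/fsubsetPn => x xA xB; exists (x |` B); split.
- by rewrite fsubUset fsub1set xA BA.
- by rewrite cardfsU1 xB cB.
Qed.

Lemma shift_edgeE G i j e : shift_edge G i j e =
  if [&& j \in e, i \notin e & sw i j e \notin edges G] then sw i j e else e.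
Proof. by []. Qed.

Lemma shift_c1 G i j e : j \in e -> i \notin e ->
  (e \in edges (shift i j G)) = (e \in edges G) && (sw i j e \in edges G).
Proof.
move=> je ie; apply/imfsetP/andP => /=.
- case=> f fF; rewrite shift_edgeE.
  case: ifP => [/and3P [_ _ _] E|H E].
  + by move: ie; rewrite E in_sw eqxx.
  + by subst f; split=> //; move: H; rewrite je ie /= => /negbFE.
- by case=> eF sF; exists e => //; rewrite shift_edgeE je ie sF.
Qed.

Lemma shift_c2 G i j e : i != j -> i \in e -> j \notin e ->
  (e \in edges (shift i j G)) = (e \in edges G) || (sw j i e \in edges G).
Proof.
move=> ij ie je; apply/imfsetP/orP => /=.
- case=> f fF; rewrite shift_edgeE.
  case: ifP => [/and3P [jf if_ _] E|H E].
  + by right; rewrite E swK.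
  + by left; subst f.
- case: (boolP (e \in edges G)) => [eF _|eF [//|sF]]; first by exists e; rewrite // shift_edgeE ie andbF.
  exists (sw j i e) => //; rewrite shift_edgeE !in_sw eqxx (negbTE ij) /= swK //.
  by rewrite eqxx eF.
Qed.

Lemma shift_c3 G i j e : i != j -> ~~ ((j \in e) && (i \notin e)) ->
  ~~ ((i \in e) && (j \notin e)) ->
  (e \in edges (shift i j G)) = (e \in edges G).
Proof.
move=> ij h1 h2; apply/imfsetP/idP => /=.
- case=> f fF; rewrite shift_edgeE.
  case: ifP => [/and3P [jf if_ _] E|H E]; last by subst f.
  by move: h2; rewrite E !in_sw eqxx [j == i]eq_sym (negbTE ij) /= ?eqxx ?andbF.
- by move=> eF; exists e => //; rewrite shift_edgeE; case: (j \in e) (i \in e) h1 => [] [].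
Qed.

Lemma card_shift G i j : #|` edges (shift i j G)| = #|` edges G|.
Proof.
apply/eqP/card_in_imfsetP => f1 f2 f1F f2F; rewrite !shift_edgeE.
case: ifP => [/and3P [jf1 if1 n1]|H1]; case: ifP => [/and3P [jf2 if2 n2]|H2].
- by move=> E; rewrite -(swK jf1 if1) E swK.
- by move=> E; move: n1; rewrite E f2F.
- by move=> E; move: n2; rewrite -E f1F.
- by [].
Qed.

Lemma disjP (A B : {fset nat}) : (forall x, x \in A -> x \notin B) -> A `&` B = fset0.
Proof.
move=> h; apply/fsetP => x; rewrite !inE; case: (boolP (x \in A)) => //= xA.
by rewrite (negbTE (h x xA)).
Qed.

Lemma disjN (A B : {fset nat}) x : A `&` B = fset0 -> x \in A -> x \in B -> False.
Proof. by move=> E xA xB; have := in_fset0 x; rewrite -E inE xA xB. Qed.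

Lemma ex_mem (K : choiceType) (A : {fset K}) : 0 < #|`A| -> exists x, x \in A.
Proof.
by case: (fset_0Vmem A) => [->|[x xA]]; [rewrite cardfs0|exists x].
Qed.

Lemma matching_card k (V : {fset nat}) (M : {fset {fset nat}}) :
  (forall e, e \in M -> e `<=` V /\ #|`e| = k) ->
  (forall e f, e \in M -> f \in M -> e != f -> e `&` f = fset0) ->
  #|`M| * k <= #|`V|.
Proof.
move: {2}#|`M| (erefl #|`M|) => c; elim: c M V => [|c IH] M V cM hM dM.
  by rewrite cM.
have [e eM] : exists e, e \in M by apply: ex_mem; rewrite cM.
have [eV ek] := hM e eM.
have h1 : #|`M `\ e| = c by move: cM; rewrite (cardfsD1 e) eM; lia.
have := IH (M `\ e) (V `\` e) h1.
have -> : #|`V `\` e| = #|`V| - k by rewrite cardfsDS // ek.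
have := fsubset_leq_card eV; rewrite ek cM mulSn => kV IH2; suff: c * k <= #|`V| - k by lia.
  rewrite -h1; apply: IH2; last first.
  by move=> f g /fsetD1P [_ fM] /fsetD1P [_ gM]; apply: dM.
move=> f /fsetD1P [fe fM]; have [fV fk] := hM f fM; split=> //.
apply/fsubsetP => x xf; rewrite inE (fsubsetP fV) // andbT.
by apply/negP => xe; apply: (disjN (dM f e fM eM fe) xf xe).
Qed.

Lemma mk_matching k (A W : {fset nat}) : 1 <= k -> A `<=` W ->
  #|`A| * k <= #|`W| ->
  exists M : {fset {fset nat}}, #|`M| = #|`A| /\
    (forall e, e \in M -> e `<=` W /\ #|`e| = k /\ exists2 x, x \in e & x \in A) /\
    (forall e f, e \in M -> f \in M -> e != f -> e `&` f = fset0).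
Proof.
move=> k1; move: {2}#|`A| (erefl #|`A|) => c; elim: c A W => [|c IH] A W cA AW hW.
  exists fset0; rewrite cardfs0 cA; split=> //; split=> //.
have [a aA] : exists a, a \in A by apply: ex_mem; rewrite cA.
have hWA : k - 1 <= #|`W `\` A|.
  rewrite cardfsDS // cA; move: hW; rewrite cA mulSn; nia.
have [B [BWA cB]] := ex_sub hWA.
have aB : a \notin B by apply/negP => /(fsubsetP BWA); rewrite inE aA.
pose e := a |` B.
have ce : #|`e| = k by rewrite cardfsU1 aB cB; lia.
have eW : e `<=` W.
  rewrite fsubUset fsub1set (fsubsetP AW) //=.
  exact: fsubset_trans BWA (fsubsetDl _ _).
have cA' : #|`A `\ a| = c by move: cA; rewrite (cardfsD1 a) aA; lia.
have AW' : A `\ a `<=` W `\` e.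
  apply/fsubsetP => x /fsetD1P [xa xA]; rewrite !inE (fsubsetP AW) // (negbTE xa) /= andbT.
  by apply/negP => xB; move: (fsubsetP BWA x xB); rewrite inE xA.
have hW' : c * k <= #|`W `\` e|.
  rewrite cardfsDS // ce; move: hW; rewrite cA mulSn; lia.
have [M [cM [hM dM]]] := IH _ _ cA' AW' (etrans (congr1 (fun t => t * k <= _) cA') hW').
have eM : e \notin M.
  apply/negP => /hM [eW' _]; move: (fsubsetP eW' a (fset1U1 a B)).
  by rewrite inE fset1U1.
have fe : forall f, f \in M -> f `&` e = fset0.
  move=> f /hM [fW' _]; apply: disjP => x xf.
  by move: (fsubsetP fW' x xf); rewrite in_fsetD => /andP [->].
exists (e |` M); split; first by rewrite cardfsU1 eM cM cA' cA.
split.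
- move=> f /fset1UP [->|fM].
    by split=> //; split=> //; exists a => //; apply: fset1U1.
  have [fW' [fk [x xf xA]]] := hM f fM; split.
    exact: fsubset_trans fW' (fsubsetDl _ _).
  by split=> //; exists x => //; move/fsetD1P: xA => [].
- move=> f g /fset1UP [->|fM] /fset1UP [->|gM]; rewrite ?eqxx //.
  + by move=> _; rewrite fsetIC fe.
  + by move=> _; rewrite fe.
  + exact: dM.
Qed.

Lemma kneser (X : {fset nat}) m (c : {fset nat} -> bool) : 2 * m + 1 <= #|`X| ->
  forall R1 R2, R1 `<=` X -> #|`R1| = m -> R2 `<=` X -> #|`R2| = m ->
  c R1 -> ~~ c R2 ->
  exists A B, [/\ A `<=` X, #|`A| = m, B `<=` X & #|`B| = m] /\
    [/\ A `&` B = fset0, c A & ~~ c B].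
Proof.
move=> hX R1 R2 R1X cR1 R2X cR2 c1 c2.
apply: NNPP => Hn.
have H : forall A B, A `<=` X -> #|`A| = m -> B `<=` X -> #|`B| = m ->
    A `&` B = fset0 -> c A = c B.
  move=> A B AX cA BX cB AB; case: (boolP (c A)) => hA; case: (boolP (c B)) => hB //.
  - by case: Hn; exists A, B.
  - by case: Hn; exists B, A; split=> //; split=> //; rewrite fsetIC.
have S1 : forall A a b, A `<=` X -> #|`A| = m -> a \in A -> b \in X -> b \notin A ->
    c A = c (sw b a A).
  move=> A a b AX cA aA bX bA.
  have hC : m <= #|`X `\` (b |` A)|.
    rewrite cardfsDS; last by rewrite fsubUset fsub1set bX AX.
    rewrite cardfsU1 bA cA; lia.
  have [C [CX cC]] := ex_sub hC.
  have CX' : C `<=` X := fsubset_trans CX (fsubsetDl _ _).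
  have A'X : sw b a A `<=` X.
    by rewrite /sw fsubUset fsub1set bX (fsubset_trans (fsubD1set _ _) AX).
  have cA' : #|`sw b a A| = m by rewrite card_sw.
  have CA : forall x, x \in C -> x \notin b |` A.
    by move=> x /(fsubsetP CX); rewrite in_fsetD => /andP [].
  rewrite (H A C) // ?(H _ C) //.
  - apply: disjP => x; rewrite in_sw => xA; apply/negP => xC; move: (CA x xC).
    by rewrite in_fset1U; case/orP: xA => [->//|/andP [_ ->]]; rewrite orbT.
  - apply: disjP => x xA; apply/negP => xC; move: (CA x xC).
    by rewrite in_fset1U xA orbT.
have S2 : forall d A, A `<=` X -> #|`A| = m -> #|`A `\` R2| = d -> c A = c R2.
  elim=> [|d IH] A AX cA dA.
  - have AR : A `<=` R2 by rewrite -fsetD_eq0 -cardfs_eq0 dA.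
    by have /eqP -> : A == R2 by rewrite eqEfcard AR cA cR2 leqnn.
  - have [a] : exists a, a \in A `\` R2 by apply: ex_mem; rewrite dA.
    rewrite in_fsetD => /andP [aR aA].
    have [b] : exists b, b \in R2 `\` A.
      apply: ex_mem; move: dA; rewrite !cardfsD fsetIC cA cR2; lia.
    rewrite in_fsetD => /andP [bA bR].
    rewrite (S1 A a b) //; last exact: (fsubsetP R2X).
    apply: IH.
    + by rewrite /sw fsubUset fsub1set (fsubsetP R2X) // (fsubset_trans (fsubD1set _ _) AX).
    + by rewrite card_sw.
    + have -> : sw b a A `\` R2 = (A `\` R2) `\ a.
        apply/fsetP => x; rewrite !inE.
        case: (eqVneq x b) => [->|xb]; first by rewrite bR (negbTE bA) !andbF.
        by rewrite /=; case: (x \in R2); case: (x == a).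
      by move: dA; rewrite (cardfsD1 a (A `\` R2)) in_fsetD aR aA; lia.
have := S2 _ R1 R1X cR1 (erefl _).
by rewrite c1 => E; move: c2; rewrite -E.
Qed.

Lemma meetP (e S : {fset nat}) : e `&` S <> fset0 <-> exists2 x, x \in e & x \in S.
Proof.
split=> [h|[x xe xS] E]; last exact: disjN E xe xS.
apply: NNPP => hn; apply: h; apply: disjP => x xe; apply/negP => xS; apply: hn.
by exists x.
Qed.

Lemma sw_U1 a b R : b \notin R -> sw a b (b |` R) = a |` R.
Proof.
move=> bR; apply/fsetP => x; rewrite in_sw !in_fset1U.
case: (eqVneq x b) => [->|xb] /=; first by rewrite (negbTE bR) orbF.
by [].
Qed.

Lemma same_edges k n s G i j : edges (shift i j G) = edges G ->
  (inCov k n s (shift i j G) -> inCov k n s G) /\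
  (inCl k n s (shift i j G) -> inCl k n s G).
Proof.
move=> E; have -> // : shift i j G = G.
by move: E; case: G => V F /= E; rewrite /shift /= E.
Qed.

Lemma complete_reg k n s G : 1 <= k -> inM k n s G -> n < k * s.+1 ->
  forall e, e `<=` verts G -> #|`e| = k -> e \in edges G.
Proof.
move=> k1 [[kg [nV [[M0 [mM0 cM0]] mn]]] mx] hn e eV ek.
apply: contraT => eF.
pose G2 := HGraph (verts G) (e |` edges G).
have : inH k n s G2.
  split; [|split=> //; split].
  - by move=> f /fset1UP [->|/kg] //.
  - exists M0; split=> //; case: mM0 => M0F dM0; split=> //.
    exact: fsubset_trans M0F (fsubsetU1 _ _).
  - move=> M [MF dM]; have h : #|`M| * k <= #|`verts G|.
      apply: matching_card dM.
      by move=> f /(fsubsetP MF) /fset1UP [->|/kg] //.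
    rewrite nV in h.
    have : #|`M| * k < s.+1 * k by apply: leq_ltn_trans h _; rewrite mulnC.
    by rewrite ltn_pmul2r.
by move/mx; rewrite /= cardfsU1 eF add1n ltnn.
Qed.

Lemma big_matching G s (e1 e2 : {fset nat}) (M0 : {fset {fset nat}}) :
  matching_number G s -> e1 \in edges G -> e2 \in edges G ->
  (forall f, f \in M0 -> f \in edges G) ->
  (forall f g, f \in M0 -> g \in M0 -> f != g -> f `&` g = fset0) ->
  e1 `&` e2 = fset0 -> (forall f, f \in M0 -> e1 `&` f = fset0) ->
  (forall f, f \in M0 -> e2 `&` f = fset0) ->
  (exists x, x \in e1) -> (exists x, x \in e2) -> #|`M0|.+2 <= s.
Proof.
move=> [_ mn] e1F e2F M0F dM0 d12 d1 d2 [x1 x1e] [x2 x2e].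
have e2M : e2 \notin M0.
  by apply/negP => /d2 E; apply: (disjN E x2e x2e).
have e1M : e1 \notin e2 |` M0.
  apply/negP => /fset1UP [E|/d1 E]; last exact: (disjN E x1e x1e).
  by subst e1; apply: (disjN d12 x1e x1e).
have := mn (e1 |` (e2 |` M0)); rewrite cardfsU1 e1M cardfsU1 e2M; apply.
split.
  apply/fsubsetP => f /fset1UP [->//|/fset1UP [->//|/M0F //]].
move=> f g /fset1UP [->|/fset1UP [->|fM]] /fset1UP [->|/fset1UP [->|gM]];
  rewrite ?eqxx // => fg.
all: first [by rewrite d1|by rewrite fsetIC d1|by rewrite d2|by rewrite fsetIC d2|by rewrite fsetIC|by apply: dM0].
Qed.

Lemma arith1 k n s : 2 <= k -> 2 <= s -> k * s.+1 <= n -> 2*(k-1)+1 <= n - s.+1.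
Proof. move=> hk hs h; nia. Qed.
Lemma arith2 k n s : 2 <= k -> 1 <= s -> k * s.+1 <= n -> k - 1 <= n - s.+1.
Proof. move=> hk hs h; nia. Qed.
Lemma arith3 k n s : 2 <= k -> 1 <= s -> k * s.+1 <= n -> (s - 1) * k <= n - 2 * k.
Proof. move=> hk hs h; nia. Qed.

Lemma cov_part k n s G i j : 2 <= k -> n <> 2 * k -> inM k n s G ->
  i \in verts G -> j \in verts G -> i != j -> 1 <= s -> k * s.+1 <= n ->
  inCov k n s (shift i j G) -> inCov k n s G.
Proof.
move=> k2 n2k HM iV jV ij s1 hn [_ [S [SV [cS HS]]]].
have [[kg [nV mn]] mx] := HM.
have kE : forall e, e \in edges G -> e `<=` verts G /\ #|`e| = k by move=> e /kg.
have In : forall e, e `<=` verts G -> #|`e| = k -> (exists2 x, x \in e & x \in S) ->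
    e \in edges (shift i j G).
  by move=> e eV ek hx; apply/HS; split=> //; split=> //; apply/meetP.
have Out : forall e, e \in edges (shift i j G) -> exists2 x, x \in e & x \in S.
  by move=> e /HS [_ [_ /meetP]].
have swin : forall a b e, a \in verts G -> e `<=` verts G -> #|`e| = k -> a \notin e ->
    b \in e -> sw a b e `<=` verts G /\ #|`sw a b e| = k.
  move=> a b e aV eV ek ae be; split; last by rewrite card_sw.
  by rewrite /sw fsubUset fsub1set aV (fsubset_trans (fsubD1set _ _) eV).
have ji : j != i by rewrite eq_sym.
have jsw : forall e, j \notin sw i j e by move=> e; rewrite in_sw (negbTE ji) eqxx.
have isw : forall e, i \notin sw j i e by move=> e; rewrite in_sw (negbTE ij) eqxx.
split=> //.
have caseA : (i \in S) = (j \in S) -> edges (shift i j G) = edges G.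
  move=> eqS; apply/fsetP => e.
  case: (boolP (j \in e)) => je; case: (boolP (i \in e)) => ie.
  - by apply: shift_c3 => //; rewrite ?je ?ie.
  - rewrite shift_c1 //; case: (boolP (e \in edges G)) => //= eF.
    apply: contraT => nsw; have [eV ek] := kE e eF.
    have eF' : e \notin edges (shift i j G) by rewrite shift_c1 // eF (negbTE nsw).
    have e'F' : sw i j e \in edges (shift i j G).
      by rewrite shift_c2 ?jsw ?in_sw ?eqxx // swK // eF orbT.
    have [x xe' xS] := Out _ e'F'.
    move: xe'; rewrite in_sw => /orP [/eqP xi|/andP [_ xe]].
    + subst x; rewrite eqS in xS; case/negP: eF'; apply: In => //; by exists j.
    + by case/negP: eF'; apply: In => //; exists x.
  - rewrite shift_c2 //; case: (boolP (e \in edges G)) => //= eF.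
    apply/negP => fF.
    have eF' : e \in edges (shift i j G) by rewrite shift_c2 // fF orbT.
    have fF' : sw j i e \notin edges (shift i j G).
      by rewrite shift_c1 ?isw ?in_sw ?eqxx // swK // (negbTE eF) andbF.
    have [fV fk] := kE _ fF.
    have [x xe xS] := Out _ eF'.
    case/negP: fF'; apply: In => //.
    case: (eqVneq x i) => [xi|xi].
    + by subst x; exists j; rewrite ?in_sw ?eqxx // -eqS.
    + by exists x => //; rewrite in_sw xi xe orbT.
  - by apply: shift_c3 => //; rewrite (negbTE je) ?(negbTE ie).
case: (boolP (i \in S)) => iS; case: (boolP (j \in S)) => jS.
- have E : edges (shift i j G) = edges G by apply: caseA; rewrite iS jS.
  by exists S; rewrite -E.
- pose X := verts G `\` (j |` S).
  have Xx : forall x, x \in X -> [/\ x != j, x \notin S & x \in verts G].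
    move=> x; rewrite in_fsetD in_fset1U negb_or.
    by case/andP => /andP [-> ->] ->.
  have XS : forall (R : {fset nat}) (x : nat), R `<=` X -> x \in R -> x \notin S.
    by move=> R x RX /(fsubsetP RX) /Xx [].
  have iX : forall R, R `<=` X -> i \notin R.
    by move=> R RX; apply/negP => /(XS R i RX); rewrite iS.
  have jX : forall R, R `<=` X -> j \notin R.
    by move=> R RX; apply/negP => /(fsubsetP RX) /Xx [nj _ _]; rewrite eqxx in nj.
  have UV : forall (a : nat) (R : {fset nat}), a \in verts G -> R `<=` X -> a |` R `<=` verts G.
    move=> a R aV RX; rewrite fsubUset fsub1set aV.
    by apply/fsubsetP => x /(fsubsetP RX) /Xx [].
  have UK : forall (a : nat) (R : {fset nat}), a \notin R -> #|`R| = k - 1 -> #|`a |` R| = k.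
    by move=> a R aR cR; rewrite cardfsU1 aR cR; clear -k2; lia.
  have ex : forall R, R `<=` X -> #|`R| = k - 1 ->
      (j |` R \in edges G) = (i |` R \notin edges G).
    move=> R RX cR; have iR := iX R RX; have jR := jX R RX.
    have a1 : i \notin j |` R by rewrite in_fset1U (negbTE ij) iR.
    have a2 : j \notin i |` R by rewrite in_fset1U (negbTE ji) jR.
    have a3 : j \in j |` R := fset1U1 _ _.
    have a4 : i \in i |` R := fset1U1 _ _.
    have h1 : j |` R \notin edges (shift i j G).
      apply/negP => /Out [x /fset1UP [xj|xR] xS]; first by subst x; rewrite xS in jS.
      by move: (XS R x RX xR); rewrite xS.
    have h2 : i |` R \in edges (shift i j G).
      by apply: In; [apply: UV|apply: UK|exists i].
    rewrite shift_c1 // sw_U1 // in h1.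
    rewrite shift_c2 // sw_U1 // in h2.
    move: h1 h2.
    by case: (j |` R \in edges G); case: (i |` R \in edges G).
  have toR : forall f, f `<=` verts G -> #|`f| = k -> j \in f ->
      (forall x, x \in f -> x \notin S) ->
      [/\ f `\ j `<=` X, #|`f `\ j| = k - 1 & j |` (f `\ j) = f].
    move=> f fV fk jf fS; split.
    - apply/fsubsetP => x /fsetD1P [xj xf].
      by rewrite in_fsetD in_fset1U negb_or xj fS //= (fsubsetP fV).
    - by move: fk; rewrite (cardfsD1 j f) jf; clear; lia.
    - exact: fsetD1K.
  have mixed : forall R1 R2, R1 `<=` X -> #|`R1| = k - 1 -> R2 `<=` X ->
      #|`R2| = k - 1 -> j |` R1 \in edges G -> j |` R2 \notin edges G -> False.
    move=> R1 R2 R1X cR1 R2X cR2 c1 c2.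
    have hX : 2 * (k - 1) + 1 <= #|`X|.
      rewrite cardfsDS; last by rewrite fsubUset fsub1set jV SV.
      rewrite cardfsU1 jS cS nV /=.
      case: (ltngtP s 1) => [|s2|s1']; [clear -s1; lia| have := arith1 k2 s2 hn; clear -cS; lia | clear -n2k hn k2 s1'; subst; lia].
    have [A [B [[AX cA BX cB] [AB cA1 cB1]]]] :=
      kneser (c := fun R => j |` R \in edges G) hX R1X cR1 R2X cR2 c1 c2.
    simpl in cA1, cB1.
    have e2F : i |` B \in edges G by move: cB1; rewrite ex // negbK.
    pose W := verts G `\` (i |` (j |` (A `|` B))).
    pose A0 := S `\ i.
    have Wx : forall x, x \in W -> [/\ x != i, x != j, x \notin A, x \notin B & x \in verts G].
      move=> x; rewrite in_fsetD !in_fset1U in_fsetU !negb_or.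
      by case/andP => /and4P [-> -> -> ->] ->.
    have A0W : A0 `<=` W.
      apply/fsubsetP => x /fsetD1P [xi xS].
      rewrite in_fsetD !in_fset1U in_fsetU (negbTE xi) (fsubsetP SV) // andbT /=.
      apply/negP => /orP [/eqP xj|/orP [xA|xB]].
      - by subst x; rewrite xS in jS.
      - by move: (XS A x AX xA); rewrite xS.
      - by move: (XS B x BX xB); rewrite xS.
    have cA0 : #|`A0| = s - 1 by rewrite /A0; move: cS; rewrite (cardfsD1 i S) iS; clear; lia.
    have cW : #|`W| = n - 2 * k.
      rewrite /W.
      rewrite cardfsDS; last first.
        rewrite !fsubUset !fsub1set iV jV /=.
        apply/andP; split; apply/fsubsetP => x xR.
          by have [_ _ ->] := Xx x (fsubsetP AX x xR).
        by have [_ _ ->] := Xx x (fsubsetP BX x xR).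
      rewrite nV cardfsU1 in_fset1U in_fsetU (negbTE ij) (negbTE (iX _ AX)) (negbTE (iX _ BX)) /=.
      rewrite cardfsU1 in_fsetU (negbTE (jX _ AX)) (negbTE (jX _ BX)) /=.
      have hU := cardfsUI A B; rewrite AB cardfs0 addn0 cA cB in hU.
      rewrite hU; clear -k2; lia.
    have hW : #|`A0| * k <= #|`W| by rewrite cA0 cW; exact: arith3.
    have [M0 [cM0 [hM0 dM0]]] := mk_matching (ltnW k2) A0W hW.
    have M0F : forall f, f \in M0 -> f \in edges G.
      move=> f fM; have [fW [fk [x xf xA0]]] := hM0 f fM.
      have fV : f `<=` verts G by apply/fsubsetP => y /(fsubsetP fW) /Wx [].
      have if_ : i \notin f by apply/negP => /(fsubsetP fW) /Wx [ni _ _ _ _]; rewrite eqxx in ni.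
      have jf : j \notin f by apply/negP => /(fsubsetP fW) /Wx [_ nj _ _ _]; rewrite eqxx in nj.
      rewrite -(@shift_c3 G i j) ?(negbTE jf) ?(negbTE if_) //.
      by apply: In => //; exists x => //; move/fsetD1P: xA0 => [].
    have d12 : (j |` A) `&` (i |` B) = fset0.
      apply: disjP => x /fset1UP [->|xA]; first by rewrite in_fset1U (negbTE ji) (negbTE (jX _ BX)).
      rewrite in_fset1U negb_or; apply/andP; split.
      + by apply/negP => /eqP xi; subst x; move: (iX _ AX); rewrite xA.
      + by apply/negP => xB; apply: (disjN AB xA xB).
    have d1 : forall f, f \in M0 -> (j |` A) `&` f = fset0.
      move=> f fM; have [fW _] := hM0 f fM; apply: disjP => x /fset1UP [->|xA];
        apply/negP => /(fsubsetP fW) /Wx [_ nj nA _ _].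
      - by rewrite eqxx in nj.
      - by rewrite xA in nA.
    have d2 : forall f, f \in M0 -> (i |` B) `&` f = fset0.
      move=> f fM; have [fW _] := hM0 f fM; apply: disjP => x /fset1UP [->|xB];
        apply/negP => /(fsubsetP fW) /Wx [ni _ _ nB _].
      - by rewrite eqxx in ni.
      - by rewrite xB in nB.
    have := big_matching mn cA1 e2F M0F dM0 d12 d1 d2 (ex_intro _ j (fset1U1 _ _)) (ex_intro _ i (fset1U1 _ _)).
    by rewrite cM0 cA0; clear -s1; lia.
  case: (classic (exists R, [/\ R `<=` X, #|`R| = k - 1 & j |` R \in edges G])).
  + case=> R1 [R1X cR1 c1].
    have allT : forall R, R `<=` X -> #|`R| = k - 1 -> j |` R \in edges G.
      by move=> R RX cR; apply: contraT => c2; case: (mixed R1 R R1X cR1 RX cR c1 c2).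
    have jS2 : j \in sw j i S by rewrite in_sw eqxx.
    have iS2 : i \notin sw j i S by rewrite isw.
    exists (sw j i S); split.
      by rewrite /sw fsubUset fsub1set jV (fsubset_trans (fsubD1set _ _) SV).
    split; first by rewrite card_sw.
    move=> e; split => [eF|[eV [ek /meetP [x xe xS2]]]].
    * have [eV ek] := kE e eF; split=> //; split=> //; apply/meetP.
      case: (boolP (j \in e)) => je; first by exists j.
      case: (boolP (i \in e)) => ie; last first.
        have eF' : e \in edges (shift i j G).
          by rewrite shift_c3 // ?(negbTE je) ?(negbTE ie).
        have [x xe xS] := Out _ eF'.
        exists x => //; rewrite in_sw xS andbT.
        by apply/orP; right; apply/negP => /eqP xi; subst x; rewrite xe in ie.
      apply: NNPP => hnn.
      have fS : forall x, x \in sw j i e -> x \notin S.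
        move=> x; rewrite in_sw => /orP [/eqP ->//|/andP [xi xe]].
        by apply/negP => xS; apply: hnn; exists x => //; rewrite in_sw xi xS orbT.
      have [fV fk] := swin j i e jV eV ek je ie.
      have [RX cR Rf] := toR _ fV fk (fset1U1 _ _) fS.
      have := ex _ RX cR; rewrite (allT _ RX cR).
      by rewrite -[i |` _]/(sw i j (sw j i e)) swK // eF.
    * case: (boolP (j \in e)) => je; case: (boolP (i \in e)) => ie.
      - rewrite -(@shift_c3 G i j) ?je ?ie //; apply: In => //; by exists i.
      - case: (classic (exists2 y, y \in e & y \in S)) => [hy|hy].
          by move: (In e eV ek hy); rewrite shift_c1 // => /andP [].
        have eS : forall x, x \in e -> x \notin S.
          by move=> y ye; apply/negP => yS; apply: hy; exists y.
        have [RX cR Re] := toR e eV ek je eS.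
        by have := allT _ RX cR; rewrite Re.
      - move: xS2; rewrite in_sw => /orP [/eqP xj|/andP [xi xS]].
          by subst x; rewrite xe in je.
        have eF' : e \in edges (shift i j G) by apply: In => //; exists x.
        move: eF'; rewrite shift_c2 // => /orP [//|fF].
        have [fV fk] := kE _ fF.
        have fF' : sw j i e \in edges (shift i j G).
          by apply: In => //; exists x => //; rewrite in_sw xi xe orbT.
        by move: fF'; rewrite shift_c1 ?isw ?in_sw ?eqxx // swK // => /andP [].
      - rewrite -(@shift_c3 G i j) ?(negbTE je) ?(negbTE ie) //; apply: In => //.
        move: xS2; rewrite in_sw => /orP [/eqP xj|/andP [xi xS]].
          by subst x; rewrite xe in je.
        by exists x.
  + move=> hT.
    have allF : forall R, R `<=` X -> #|`R| = k - 1 -> j |` R \notin edges G.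
      by move=> R RX cR; apply/negP => c1; apply: hT; exists R.
    suff E : edges (shift i j G) = edges G by exists S; rewrite -E.
    apply/fsetP => e.
    case: (boolP (j \in e)) => je; case: (boolP (i \in e)) => ie.
    * by apply: shift_c3 => //; rewrite ?je ?ie.
    * rewrite shift_c1 //; case: (boolP (e \in edges G)) => //= eF.
      apply: contraT => nsw; have [eV ek] := kE e eF.
      have eF' : e \notin edges (shift i j G) by rewrite shift_c1 // eF (negbTE nsw).
      have eS : forall x, x \in e -> x \notin S.
        by move=> x xe; apply/negP => xS; case/negP: eF'; apply: In => //; exists x.
      have [RX cR Re] := toR e eV ek je eS.
      by have := allF _ RX cR; rewrite Re eF.
    * rewrite shift_c2 //; case: (boolP (e \in edges G)) => //= eF.
      apply/negP => fF; have [fV fk] := kE _ fF.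
      have fF' : sw j i e \notin edges (shift i j G).
        by rewrite shift_c1 ?isw ?in_sw ?eqxx // swK // (negbTE eF) andbF.
      have fS : forall x, x \in sw j i e -> x \notin S.
        by move=> x xe; apply/negP => xS; case/negP: fF'; apply: In => //; exists x.
      have [RX cR Re] := toR _ fV fk (fset1U1 _ _) fS.
      by have := allF _ RX cR; rewrite Re fF.
    * by apply: shift_c3 => //; rewrite (negbTE je) ?(negbTE ie).
- exfalso.
  have h : k - 1 <= #|`verts G `\` (i |` S)|.
    rewrite cardfsDS; last by rewrite fsubUset fsub1set iV SV.
    rewrite cardfsU1 iS cS nV /=; exact: arith2.
  have [B [BV cB]] := ex_sub h.
  have Bx : forall x, x \in B -> [/\ x != i, x \notin S & x \in verts G].
    move=> x /(fsubsetP BV); rewrite in_fsetD in_fset1U negb_or.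
    by case/andP => /andP [-> ->] ->.
  have jB : j \notin B by apply/negP => /Bx [_ nS _]; rewrite jS in nS.
  have iB : i \notin B by apply/negP => /Bx [ni _ _]; rewrite eqxx in ni.
  pose e := j |` B.
  have ie : i \notin e by rewrite in_fset1U (negbTE ij) iB.
  have je : j \in e by apply: fset1U1.
  have eV : e `<=` verts G.
    by rewrite fsubUset fsub1set jV; apply/fsubsetP => x /Bx [].
  have ek : #|`e| = k by rewrite cardfsU1 jB cB; clear -k2; lia.
  have eF' : e \in edges (shift i j G) by apply: In => //; exists j.
  move: (eF'); rewrite shift_c1 // => /andP [eF sF].
  have sF' : sw i j e \in edges (shift i j G).
    by rewrite shift_c2 ?jsw ?in_sw ?eqxx // sF.
  have [x] := Out _ sF'.
  rewrite in_sw in_fset1U => /orP [/eqP ->|/andP [xj /orP [/eqP xj'|xB]]] xS.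
  + by rewrite xS in iS.
  + by rewrite xj' eqxx in xj.
  + by have [_ nS _] := Bx x xB; rewrite xS in nS.
- have E : edges (shift i j G) = edges G by apply: caseA; rewrite (negbTE iS) (negbTE jS).
  by exists S; rewrite -E.
Qed.

Lemma arith4 k s : 2 <= k -> 2 <= s -> 2 * (k - 1) + 1 <= k * s + k - 1 - 1.
Proof. move=> hk hs; nia. Qed.
Lemma arith5 k s : 2 <= k -> 2 <= s ->
  (s - 1) * k <= k * s + k - 1 - 1 - ((k - 1) + (k - 1)).
Proof. move=> hk hs; nia. Qed.

Lemma cl_part k n s G i j : 2 <= k -> n <> 2 * k -> inM k n s G ->
  i \in verts G -> j \in verts G -> i != j -> 1 <= s -> k * s.+1 <= n ->
  inCl k n s (shift i j G) -> inCl k n s G.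
Proof.
move=> k2 n2k HM iV jV ij s1 hn [_ [T [TV [cT HT]]]].
have [[kg [nV mn]] mx] := HM.
have kE : forall e, e \in edges G -> e `<=` verts G /\ #|`e| = k by move=> e /kg.
have In : forall e, e `<=` T -> #|`e| = k -> e \in edges (shift i j G).
  by move=> e eT ek; apply/HT.
have Out : forall e, e \in edges (shift i j G) -> e `<=` T by move=> e /HT [].
have ji : j != i by rewrite eq_sym.
have jsw : forall e, j \notin sw i j e by move=> e; rewrite in_sw (negbTE ji) eqxx.
have isw : forall e, i \notin sw j i e by move=> e; rewrite in_sw (negbTE ij) eqxx.
split=> //.
have caseA : (i \in T) = (j \in T) -> edges (shift i j G) = edges G.
  move=> eqT; apply/fsetP => e.
  case: (boolP (j \in e)) => je; case: (boolP (i \in e)) => ie.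
  - by apply: shift_c3 => //; rewrite ?je ?ie.
  - rewrite shift_c1 //; case: (boolP (e \in edges G)) => //= eF.
    apply: contraT => nsw; have [eV ek] := kE e eF.
    have eF' : e \notin edges (shift i j G) by rewrite shift_c1 // eF (negbTE nsw).
    have e'F' : sw i j e \in edges (shift i j G).
      by rewrite shift_c2 ?jsw ?in_sw ?eqxx // swK // eF orbT.
    have sT := Out _ e'F'.
    have iT : i \in T by apply: (fsubsetP sT); rewrite in_sw eqxx.
    case/negP: eF'; apply: In => //; apply/fsubsetP => x xe.
    case: (eqVneq x j) => [->|xj]; first by rewrite -eqT.
    by apply: (fsubsetP sT); rewrite in_sw xj xe orbT.
  - rewrite shift_c2 //; case: (boolP (e \in edges G)) => //= eF.
    apply/negP => fF.
    have eF' : e \in edges (shift i j G) by rewrite shift_c2 // fF orbT.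
    have fF' : sw j i e \notin edges (shift i j G).
      by rewrite shift_c1 ?isw ?in_sw ?eqxx // swK // (negbTE eF) andbF.
    have [fV fk] := kE _ fF.
    have eT := Out _ eF'.
    case/negP: fF'; apply: In => //; apply/fsubsetP => x.
    rewrite in_sw => /orP [/eqP ->|/andP [_ xe]].
    + by rewrite -eqT (fsubsetP eT).
    + exact: (fsubsetP eT).
  - by apply: shift_c3 => //; rewrite (negbTE je) ?(negbTE ie).
case: (boolP (i \in T)) => iT; case: (boolP (j \in T)) => jT.
- have E : edges (shift i j G) = edges G by apply: caseA; rewrite iT jT.
  by exists T; rewrite -E.
- case: (ltngtP s 1) => [s0|s2|s1']; first by clear -s1 s0; lia.
  + pose X := T `\ i.
    have XT : X `<=` T := fsubD1set _ _.
    have iX : forall R, R `<=` X -> i \notin R.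
      by move=> R RX; apply/negP => /(fsubsetP RX); rewrite in_fsetD1 eqxx.
    have jX : forall R, R `<=` X -> j \notin R.
      by move=> R RX; apply/negP => /(fsubsetP RX) /(fsubsetP XT); rewrite (negbTE jT).
    have UT : forall (R : {fset nat}), R `<=` X -> i |` R `<=` T.
      by move=> R RX; rewrite fsubUset fsub1set iT (fsubset_trans RX XT).
    have UK : forall (a : nat) (R : {fset nat}), a \notin R -> #|`R| = k - 1 -> #|`a |` R| = k.
      by move=> a R aR cR; rewrite cardfsU1 aR cR; clear -k2; lia.
    have ex : forall R, R `<=` X -> #|`R| = k - 1 ->
        (j |` R \in edges G) = (i |` R \notin edges G).
      move=> R RX cR; have iR := iX R RX; have jR := jX R RX.
      have a1 : i \notin j |` R by rewrite in_fset1U (negbTE ij) iR.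
      have a2 : j \notin i |` R by rewrite in_fset1U (negbTE ji) jR.
      have a3 : j \in j |` R := fset1U1 _ _.
      have a4 : i \in i |` R := fset1U1 _ _.
      have h1 : j |` R \notin edges (shift i j G).
        by apply/negP => /Out /fsubsetP /(_ j a3); rewrite (negbTE jT).
      have h2 : i |` R \in edges (shift i j G) by apply: In; [apply: UT|apply: UK].
      rewrite shift_c1 // sw_U1 // in h1.
      rewrite shift_c2 // sw_U1 // in h2.
      move: h1 h2.
      by case: (j |` R \in edges G); case: (i |` R \in edges G).
    have mkR : forall e a, a \in e -> #|`e| = k ->
        (forall x, x \in e -> x != a -> x \in X) ->
        [/\ e `\ a `<=` X, #|`e `\ a| = k - 1 & a |` (e `\ a) = e].
      move=> e a ae ek eX; split.
      - by apply/fsubsetP => x /fsetD1P [xa xe]; apply: eX.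
      - by move: ek; rewrite (cardfsD1 a e) ae; clear; lia.
      - exact: fsetD1K.
    have mixed : forall R1 R2, R1 `<=` X -> #|`R1| = k - 1 -> R2 `<=` X ->
        #|`R2| = k - 1 -> j |` R1 \in edges G -> j |` R2 \notin edges G -> False.
      move=> R1 R2 R1X cR1 R2X cR2 c1 c2.
      have cX : #|`X| = k * s + k - 1 - 1.
        by rewrite /X; move: cT; rewrite (cardfsD1 i T) iT; clear; lia.
      have hX : 2 * (k - 1) + 1 <= #|`X| by rewrite cX; exact: arith4.
      have [A [B [[AX cA BX cB] [AB cA1 cB1]]]] :=
        kneser (c := fun R => j |` R \in edges G) hX R1X cR1 R2X cR2 c1 c2.
      simpl in cA1, cB1.
      have e2F : i |` B \in edges G by move: cB1; rewrite ex // negbK.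
      pose W := X `\` (A `|` B).
      have Wx : forall x, x \in W -> [/\ x != i, x != j, x \notin A, x \notin B & x \in T].
        move=> x; rewrite /W /X !in_fsetD in_fsetU in_fset1 negb_or.
        case/andP => /andP [nA nB] /andP [xi xT]; split=> //.
        by apply/negP => /eqP xj; subst x; rewrite xT in jT.
      have cW : #|`W| = k * s + k - 1 - 1 - ((k - 1) + (k - 1)).
        rewrite /W cardfsDS; last by rewrite fsubUset AX BX.
        have hU := cardfsUI A B; rewrite AB cardfs0 addn0 cA cB in hU.
        by rewrite hU cX.
      have hA0 : s - 1 <= #|`W|.
        rewrite cW; apply: leq_trans (arith5 k2 s2); apply: leq_pmulr.
        by clear -k2; lia.
      have [A0 [A0W cA0]] := ex_sub hA0.
      have hW' : #|`A0| * k <= #|`W| by rewrite cA0 cW; exact: arith5.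
      have [M0 [cM0 [hM0 dM0]]] := mk_matching (ltnW k2) A0W hW'.
      have M0F : forall f, f \in M0 -> f \in edges G.
        move=> f fM; have [fW [fk _]] := hM0 f fM.
        have fT : f `<=` T by apply/fsubsetP => y /(fsubsetP fW) /Wx [].
        have if_ : i \notin f.
          by apply/negP => /(fsubsetP fW) /Wx [ni _ _ _ _]; rewrite eqxx in ni.
        have jf : j \notin f.
          by apply/negP => /(fsubsetP fW) /Wx [_ nj _ _ _]; rewrite eqxx in nj.
        rewrite -(@shift_c3 G i j) ?(negbTE jf) ?(negbTE if_) //; exact: In.
      have d12 : (j |` A) `&` (i |` B) = fset0.
        apply: disjP => x /fset1UP [->|xA].
          by rewrite in_fset1U (negbTE ji) (negbTE (jX _ BX)).
        rewrite in_fset1U negb_or; apply/andP; split.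
        + by apply/negP => /eqP xi; subst x; move: (iX _ AX); rewrite xA.
        + by apply/negP => xB; apply: (disjN AB xA xB).
      have d1 : forall f, f \in M0 -> (j |` A) `&` f = fset0.
        move=> f fM; have [fW _] := hM0 f fM; apply: disjP => x /fset1UP [->|xA];
          apply/negP => /(fsubsetP fW) /Wx [_ nj nA _ _].
        - by rewrite eqxx in nj.
        - by rewrite xA in nA.
      have d2 : forall f, f \in M0 -> (i |` B) `&` f = fset0.
        move=> f fM; have [fW _] := hM0 f fM; apply: disjP => x /fset1UP [->|xB];
          apply/negP => /(fsubsetP fW) /Wx [ni _ _ nB _].
        - by rewrite eqxx in ni.
        - by rewrite xB in nB.
      have := big_matching mn cA1 e2F M0F dM0 d12 d1 d2
        (ex_intro _ j (fset1U1 _ _)) (ex_intro _ i (fset1U1 _ _)).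
      by rewrite cM0 cA0; clear -s1; lia.
    case: (classic (exists R, [/\ R `<=` X, #|`R| = k - 1 & j |` R \in edges G])).
    * case=> R1 [R1X cR1 c1].
      have allT : forall R, R `<=` X -> #|`R| = k - 1 -> j |` R \in edges G.
        by move=> R RX cR; apply: contraT => c2; case: (mixed R1 R R1X cR1 RX cR c1 c2).
      exists (sw j i T); split.
        by rewrite /sw fsubUset fsub1set jV (fsubset_trans (fsubD1set _ _) TV).
      split; first by rewrite card_sw.
      have iT2 : forall e, e `<=` sw j i T -> i \notin e.
        by move=> e eT2; apply/negP => /(fsubsetP eT2); rewrite (negbTE (isw T)).
      move=> e; split => [eF|[eT2 ek]].
      -- have [eV ek] := kE e eF; split=> //.
         case: (boolP (j \in e)) => je; case: (boolP (i \in e)) => ie.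
         ++ exfalso; have eF' : e \in edges (shift i j G).
              by rewrite shift_c3 // ?je ?ie.
            by have := fsubsetP (Out _ eF') j je; rewrite (negbTE jT).
         ++ have e'F' : sw i j e \in edges (shift i j G).
              by rewrite shift_c2 ?jsw ?in_sw ?eqxx // swK // eF orbT.
            have sT := Out _ e'F'.
            apply/fsubsetP => x xe; rewrite in_sw.
            case: (eqVneq x j) => [->|xj] //=.
            apply/andP; split.
              by apply/negP => /eqP xi; subst x; rewrite xe in ie.
            by apply: (fsubsetP sT); rewrite in_sw xj xe orbT.
         ++ exfalso; have eF' : e \in edges (shift i j G) by rewrite shift_c2 // eF.
            have eT := Out _ eF'.
            have [RX cR Re] : [/\ e `\ i `<=` X, #|`e `\ i| = k - 1 & i |` (e `\ i) = e].
              apply: mkR => // x xe xi; rewrite in_fsetD1 xi (fsubsetP eT) //.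
            by have := ex _ RX cR; rewrite (allT _ RX cR) Re eF.
         ++ have eF' : e \in edges (shift i j G).
              by rewrite shift_c3 // ?(negbTE je) ?(negbTE ie).
            have eT := Out _ eF'.
            apply/fsubsetP => x xe; rewrite in_sw (fsubsetP eT) // andbT.
            apply/orP; right; apply/negP => /eqP xi; subst x; by rewrite xe in ie.
      -- have ie := iT2 e eT2.
         case: (boolP (j \in e)) => je.
         ++ have [RX cR Re] : [/\ e `\ j `<=` X, #|`e `\ j| = k - 1 & j |` (e `\ j) = e].
              apply: mkR => // x xe xj; move: (fsubsetP eT2 x xe).
              by rewrite in_sw (negbTE xj) /= in_fsetD1.
            by have := allT _ RX cR; rewrite Re.
         ++ have eT : e `<=` T.
              apply/fsubsetP => x xe; move: (fsubsetP eT2 x xe); rewrite in_sw.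
              case/orP => [/eqP xj|/andP [_ //]]; by subst x; rewrite xe in je.
            rewrite -(@shift_c3 G i j) ?(negbTE je) ?(negbTE ie) //; exact: In.
    * move=> hT.
      have allF : forall R, R `<=` X -> #|`R| = k - 1 -> j |` R \notin edges G.
        by move=> R RX cR; apply/negP => c1; apply: hT; exists R.
      suff E : edges (shift i j G) = edges G by exists T; rewrite -E.
      apply/fsetP => e.
      case: (boolP (j \in e)) => je; case: (boolP (i \in e)) => ie.
      -- by apply: shift_c3 => //; rewrite ?je ?ie.
      -- rewrite shift_c1 //; case: (boolP (e \in edges G)) => //= eF; exfalso.
         have [eV ek] := kE e eF.
         have e'F' : sw i j e \in edges (shift i j G).
           by rewrite shift_c2 ?jsw ?in_sw ?eqxx // swK // eF orbT.
         have sT := Out _ e'F'.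
         have [RX cR Re] : [/\ e `\ j `<=` X, #|`e `\ j| = k - 1 & j |` (e `\ j) = e].
           apply: mkR => // x xe xj; rewrite in_fsetD1 (fsubsetP sT) ?andbT.
             by apply/negP => /eqP xi; subst x; rewrite xe in ie.
           by rewrite in_sw xj xe orbT.
         by have := allF _ RX cR; rewrite Re eF.
      -- rewrite shift_c2 //; case: (boolP (e \in edges G)) => //= eF.
         apply/negP => fF; have [fV fk] := kE _ fF.
         have eF' : e \in edges (shift i j G) by rewrite shift_c2 // fF orbT.
         have eT := Out _ eF'.
         have RX : e `\ i `<=` X.
           by apply/fsubsetP => x /fsetD1P [xi xe]; rewrite in_fsetD1 xi (fsubsetP eT).
         have cR : #|`e `\ i| = k - 1.
           move: fk; rewrite /sw cardfsU1 in_fsetD1 (negbTE je) andbF /=; clear; lia.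
         by have := allF _ RX cR; rewrite -[j |` _]/(sw j i e) fF.
      -- by apply: shift_c3 => //; rewrite (negbTE je) ?(negbTE ie).
  + have cT1 : #|`T| = 2 * k - 1 by rewrite cT s1'; clear; lia.
    have hn2 : 2 * k + 1 <= n by move: hn; rewrite s1'; clear -n2k; lia.
    pose U := j |` T.
    have UV : U `<=` verts G by rewrite fsubUset fsub1set jV TV.
    have cU : #|`U| = 2 * k by rewrite cardfsU1 jT cT1; clear -k2; lia.
    have [y] : exists y, y \in verts G `\` U.
      by apply: ex_mem; rewrite cardfsDS // cU nV; clear -hn2; lia.
    rewrite in_fsetD => /andP [yU yV].
    have [B0 [B0T cB0]] : exists B0, B0 `<=` T /\ #|`B0| = k - 2.
      by apply: ex_sub; rewrite cT1; clear; lia.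
    pose es := j |` (y |` B0).
    have TU : T `<=` U := fsubsetU1 _ _.
    have yB0 : y \notin B0.
      by apply/negP => /(fsubsetP B0T) /(fsubsetP TU); rewrite (negbTE yU).
    have jyB0 : j \notin y |` B0.
      rewrite in_fset1U negb_or; apply/andP; split.
      - by apply/negP => /eqP jy; move: yU; rewrite -jy fset1U1.
      - by apply/negP => /(fsubsetP B0T); rewrite (negbTE jT).
    pose Fs := [fset e in fpowerset (verts G) | (j \in e) && (#|`e| == k)].
    have Fsm : forall e, (e \in Fs) = [&& e `<=` verts G, j \in e & #|`e| == k].
      by move=> e; rewrite !inE fpowersetE.
    have esF : es \in Fs.
      rewrite Fsm; apply/and3P; split; first 2 last.
      - by rewrite cardfsU1 jyB0 cardfsU1 yB0 cB0; apply/eqP; clear -k2; lia.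
      - by rewrite fsubUset fsub1set jV fsubUset fsub1set yV (fsubset_trans B0T TV).
      - exact: fset1U1.
    have HGs : inH k n 1 (HGraph (verts G) Fs).
      split; [|split=> //; split].
      - by move=> e; rewrite /= Fsm => /and3P [? _ /eqP ?].
      - exists [fset es]; split; last exact: cardfs1.
        split; first by rewrite /= fsub1set.
        by move=> e f /fset1P -> /fset1P ->; rewrite eqxx.
      - move=> M [MF dM]; rewrite leqNgt; apply/negP => h.
        have [e eM] : exists e, e \in M by apply: ex_mem; clear -h; lia.
        have [f] : exists f, f \in M `\ e.
          by apply: ex_mem; move: h; rewrite (cardfsD1 e M) eM; clear; lia.
        move/fsetD1P => [fe fM].
        have jf : j \in f by move: (fsubsetP MF f fM); rewrite /= Fsm => /and3P [].
        have je : j \in e by move: (fsubsetP MF e eM); rewrite /= Fsm => /and3P [].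
        exact: disjN (dM f e fM eM fe) jf je.
    rewrite s1' in mx; have hmx := mx _ HGs; simpl in hmx.
    pose phi := fun e : {fset nat} => U `\` e.
    have inj : {in edges (shift i j G) &, injective phi}.
      move=> e1 e2 /Out e1T /Out e2T E; apply/fsetP => x.
      case: (boolP (x \in U)) => xU.
      + have := congr1 (fun A => x \in A) E; rewrite /phi /= !in_fsetD xU !andbT.
        by move/negb_inj.
      + have xT : x \notin T by apply: contra xU; apply: (fsubsetP TU).
        rewrite (negbTE (contra (fsubsetP e1T x) xT)).
        by rewrite (negbTE (contra (fsubsetP e2T x) xT)).
    have cim : #|` phi @` edges (shift i j G)| = #|` edges (shift i j G)|.
      by apply/eqP/card_in_imfsetP.
    have nes : es \notin phi @` edges (shift i j G).
      apply/negP => /imfsetP [e _ E].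
      have yes : y \in es by rewrite in_fset1U fset1U1 orbT.
      by move: yes; rewrite E /phi in_fsetD (negbTE yU) andbF.
    have sub : es |` phi @` edges (shift i j G) `<=` Fs.
      rewrite fsubUset fsub1set esF /=; apply/fsubsetP => f /imfsetP [e eF' ->].
      have [eT ek] := (HT e).1 eF'.
      rewrite Fsm /phi; apply/and3P; split.
      - exact: fsubset_trans (fsubsetDl _ _) UV.
      - by rewrite in_fsetD fset1U1 andbT; apply: contra jT; apply: (fsubsetP eT).
      - by rewrite cardfsDS ?(fsubset_trans eT TU) // cU ek; apply/eqP; clear -k2; lia.
    have := fsubset_leq_card sub; rewrite cardfsU1 nes add1n cim card_shift => h.
    by move: (leq_trans h hmx); rewrite ltnn.
- exfalso.
  have h : k - 1 <= #|`T `\ j|.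
    have := cardfsD1 j T; rewrite jT cT => h; clear -h k2 s1; nia.
  have [B [BT cB]] := ex_sub h.
  have jB : j \notin B by apply/negP => /(fsubsetP BT); rewrite in_fsetD1 eqxx.
  pose e := j |` B.
  have je : j \in e := fset1U1 _ _.
  have eT : e `<=` T by rewrite fsubUset fsub1set jT (fsubset_trans BT (fsubD1set _ _)).
  have ie : i \notin e by apply/negP => /(fsubsetP eT); rewrite (negbTE iT).
  have ek : #|`e| = k by rewrite cardfsU1 jB cB; clear -k2; lia.
  have eF' := In e eT ek.
  move: (eF'); rewrite shift_c1 // => /andP [eF sF].
  have sF' : sw i j e \in edges (shift i j G).
    by rewrite shift_c2 ?jsw ?in_sw ?eqxx // sF.
  have := fsubsetP (Out _ sF') i (fset1U1 _ _).
  by rewrite (negbTE iT).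
- have E : edges (shift i j G) = edges G.
    by apply: caseA; rewrite (negbTE iT) (negbTE jT).
  by exists T; rewrite -E.
Qed.

Unset Implicit Arguments.

Theorem lemma5 (k n s : nat) (G : hgraph) (i j : nat) :
  2 <= k -> n <> 2 * k -> inM k n s G ->
  i \in verts G -> j \in verts G -> i < j ->
  (inCov k n s (shift i j G) -> inCov k n s G) /\
  (inCl k n s (shift i j G) -> inCl k n s G).
Proof.
move=> k2 n2k HM iV jV ltij.
have ij : i != j by rewrite neq_ltn ltij.
have [[kg [nV mn]] mx] := HM.
case: (ltnP n (k * s.+1)) => hn.
  apply: same_edges; apply/fsetP => e.
  have full := complete_reg (ltnW k2) HM hn.
  case: (boolP (j \in e)) => je; case: (boolP (i \in e)) => ie.
  - by apply: shift_c3 => //; rewrite ?je ?ie.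
  - rewrite shift_c1 //; case: (boolP (e \in edges G)) => //= eF.
    have [eV ek] := kg e eF; apply: full; last by rewrite card_sw.
    by rewrite /sw fsubUset fsub1set iV (fsubset_trans (fsubD1set _ _) eV).
  - rewrite shift_c2 //; case: (boolP (e \in edges G)) => //= eF; apply/negP => fF.
    have [fV fk] := kg _ fF.
    have jf : j \in sw j i e by rewrite in_sw eqxx.
    have if_ : i \notin sw j i e by rewrite in_sw eqxx (negbTE ij).
    have e_eq : sw i j (sw j i e) = e := swK ie je.
    have eV : e `<=` verts G.
      by rewrite -e_eq /sw fsubUset fsub1set iV (fsubset_trans (fsubD1set _ _) fV).
    have ek : #|`e| = k by rewrite -e_eq card_sw.
    by move: (full e eV ek); rewrite (negbTE eF).
  - by apply: shift_c3 => //; rewrite (negbTE je) ?(negbTE ie).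
case: (posnP s) => [s0|s1].
  have F0 : edges G = fset0.
    apply/fsetP => e; rewrite in_fset0; apply/negP => eF.
    have hm : is_matching G [fset e].
      split; first by rewrite fsub1set.
      by move=> ? ? /fset1P -> /fset1P ->; rewrite eqxx.
    by have := mn.2 _ hm; rewrite cardfs1 s0.
  apply: same_edges; rewrite F0; apply/fsetP => e; rewrite in_fset0.
  by apply/negP => /imfsetP [f]; rewrite /= F0 in_fset0.
split; [exact: cov_part | exact: cl_part].
Qed.
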